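(* Let $n\ge1$, $m\ge2$, let $v$ be a vertex of $Y_{n,m}$ and let $p$ be a pivot of $v$. Then $\operatorname{ps}_p(v)=\sum_{i=1}^{p}iv_i+\sum_{i=p+1}^{m}(m+1-i)v_i$. In particular, if $p$ is an inner pivot, then $\operatorname{ps}_p(v)\le\binom{p+1}{2}+\binom{m-p+1}{2}$.
   Context: The Yoke graph $Y_{n,m}$ has vertices the tuples $v=(v_0,\dots,v_{m+1})$ with $v_0,v_{m+1}\in\mathbb{Z}_n$ (identified with their least non-negative representatives), $v_1,\dots,v_m\in\{0,1\}$, $\sum v_i\equiv0\pmod n$; $u\sim v$ iff $u=\overleftarrow{s}_i(v)$ or $u=\overrightarrow{s}_i(v)$ for some $0\le i\le m$, where $\overleftarrow{s}_i(v)$ replaces $v_i,v_{i+1}$ by $v_i+1,v_{i+1}-1$ and $\overrightarrow{s}_i(v)$ by $v_i-1,v_{i+1}+1$ (buckets mod $n$). A pivot of $v$ is an integer $-1\le p\le m+1$ with $n\mid\sum_{i=0}^{p}v_i$; $-1$ and $m+1$ are outer pivots, others are inner pivots. For a path $P$ from $v$ to the zero vertex $0$: $0\le p\le m$ is a wall if no step of $P$ changes entries $p,p+1$; $-1$ is a wall if no step of $P$ is a left shift $\overleftarrow{s}_0$; $m+1$ is a wall if no step is a right shift $\overrightarrow{s}_m$. For a pivot $p$ of $v$, $\operatorname{ps}_p(v)$ denotes the minimum length of a path from $v$ to $0$ having $p$ as a wall. *)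

(* Defs.v *)
From mathcomp Require Import all_boot all_order all_algebra.
From Stdlib Require Import ClassicalEpsilon.
Set Implicit Arguments. Unset Strict Implicit. Unset Printing Implicit Defensive.
Import Order.TTheory GRing.Theory Num.Theory.
Local Open Scope ring_scope.

(* A (candidate) vertex is a function v : nat -> int; only the entries
   v 0, ..., v (m+1) matter. *)
Definition is_vertex (n m : nat) (v : nat -> int) : Prop :=
  [/\ 0 <= v 0%N < n%:Z,
      0 <= v m.+1 < n%:Z,
      (forall i : nat, (1 <= i <= m)%N -> v i = 0 \/ v i = 1)
    & (n%:Z %| \sum_(i < m.+2) v i)%Z].

Definition bucket (n m : nat) (j : nat) (x : int) : int :=
  if (j == 0%N) || (j == m.+1) then (x %% n%:Z)%Z else x.

(* left = true : s_i^<- (v_i+1, v_{i+1}-1);  left = false : s_i^-> (v_i-1, v_{i+1}+1) *)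
Definition shift (n m : nat) (left : bool) (i : nat) (v : nat -> int) : nat -> int :=
  fun j => let d : int := if left then 1 else -1 in
    if j == i then bucket n m j (v j + d)
    else if j == i.+1 then bucket n m j (v j - d)
    else v j.

(* A path is given by its sequence of steps (i, left); each step applies the
   corresponding shift and must land on a vertex of Y_{n,m}. *)
Fixpoint is_walk (n m : nat) (v : nat -> int) (P : seq (nat * bool)) : Prop :=
  match P with
  | [::] => True
  | (i, b) :: P' => (i <= m)%N /\ is_vertex n m (shift n m b i v)
                    /\ is_walk n m (shift n m b i v) P'
  end.

Definition walk_end (n m : nat) (v : nat -> int) (P : seq (nat * bool)) : nat -> int :=
  foldl (fun w s => shift n m s.2 s.1 w) v P.

Definition is_path_to_zero (n m : nat) (v : nat -> int) (P : seq (nat * bool)) : Prop :=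
  is_walk n m v P /\ (forall j : nat, (j <= m.+1)%N -> walk_end n m v P j = 0).

Definition is_wall (m : nat) (p : int) (P : seq (nat * bool)) : Prop :=
  forall s, s \in P ->
    if p == -1 then ~~ ((s.1 == 0%N) && s.2)
    else if p == (m.+1)%:Z then ~~ ((s.1 == m) && ~~ s.2)
    else (s.1)%:Z != p.

Definition is_pivot (n m : nat) (v : nat -> int) (p : int) : Prop :=
  -1 <= p <= (m.+1)%:Z /\ (n%:Z %| \sum_(i < m.+2 | (i%:Z <= p)) v i)%Z.

Definition is_min_wall_len (n m : nat) (p : int) (v : nat -> int) (k : nat) : Prop :=
  (exists P, is_path_to_zero n m v P /\ is_wall m p P /\ size P = k) /\
  (forall P, is_path_to_zero n m v P -> is_wall m p P -> (k <= size P)%N).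

(* ps_p(v) : the minimum (chosen by classical choice; it is unique when it exists) *)
Definition ps (n m : nat) (p : int) (v : nat -> int) : nat :=
  epsilon (inhabits 0%N) (is_min_wall_len n m p v).

(* Main.v *)
Require Import Defs.
From mathcomp Require Import all_boot all_order all_algebra zify ring.
From Stdlib Require Import ClassicalEpsilon Classical.
Import Order.TTheory GRing.Theory Num.Theory.
Local Open Scope ring_scope.

Lemma shift_other n m b i w j : j != i -> j != i.+1 -> shift n m b i w j = w j.
Proof. by rewrite /shift => /negbTE -> /negbTE ->. Qed.

Lemma shift_at n m b i w : shift n m b i w i = bucket n m i (w i + (if b then 1 else -1)).
Proof. by rewrite /shift eqxx. Qed.

Lemma shift_at1 n m b i w : shift n m b i w i.+1 = bucket n m i.+1 (w i.+1 - (if b then 1 else -1)).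
Proof. by rewrite /shift (gtn_eqF (ltnSn i)) eqxx. Qed.

Lemma bucket_in n m j x : (1 <= j <= m)%N -> bucket n m j x = x.
Proof. move=> H; rewrite /bucket; case: ifP => //; lia. Qed.

Lemma bucket0 n m x : bucket n m 0 x = (x %% n%:Z)%Z.
Proof. by []. Qed.

Lemma bucketS n m x : bucket n m m.+1 x = (x %% n%:Z)%Z.
Proof. by rewrite /bucket eqxx orbT. Qed.

Lemma bucket_dvd n m j x : (n%:Z %| bucket n m j x - x)%Z.
Proof.
rewrite /bucket; case: ifP => _; last by rewrite subrr dvdz0.
have -> : ((x %% n%:Z)%Z - x) = - ((x %/ n%:Z)%Z * n%:Z) by rewrite {2}(divz_eq x n); ring.
by rewrite rpredN; apply: dvdz_mull; rewrite dvdzz.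
Qed.

Lemma mod_ge n x : (0 < n)%N -> x < n%:Z -> x <= (x %% n%:Z)%Z.
Proof.
move=> Hn Hx; case: (ltP x 0) => H.
  have : n%:Z != 0 by lia.
  move=> /(modz_ge0 x); lia.
by rewrite modz_small //; lia.
Qed.

Lemma mod_bnd n x : (0 < n)%N -> 0 <= (x %% n%:Z)%Z < n%:Z.
Proof.
move=> Hn; rewrite modz_ge0 /=; last lia.
by rewrite ltz_pmod //; lia.
Qed.

Lemma sum_diff2 (N a b : nat) (P : pred nat) (f g : nat -> int) :
  (a < N)%N -> (b < N)%N -> a != b -> (forall j, (j < N)%N -> j != a -> j != b -> f j = g j) ->
  \sum_(j < N | P j) f j = \sum_(j < N | P j) g j
     + ((if P a then f a - g a else 0) + (if P b then f b - g b else 0)).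
Proof.
move=> Ha Hb Hab Hfg.
rewrite !(big_mkcond (fun j : 'I_N => P j)) /=.
rewrite (bigD1 (Ordinal Ha)) //= [in RHS](bigD1 (Ordinal Ha)) //=.
have Hba : Ordinal Hb != Ordinal Ha by rewrite eq_sym.
rewrite (bigD1 (Ordinal Hb)) //= [in RHS](bigD1 (Ordinal Hb)) //=.
rewrite (eq_bigr (fun j : 'I_N => if P j then g j else 0)); last first.
  move=> j /andP [H1 H2]; rewrite Hfg //.
rewrite !addrA; case: (P a); case: (P b); rewrite ?subr0 ?addr0; ring.
Qed.

Definition cf (m : nat) (p : int) (j : nat) : int :=
  if (1 <= j)%N && (j%:Z <= p) then j%:Z
  else if (p + 1 <= j%:Z) && (j <= m)%N then (m.+1 - j)%N%:Z else 0.

Definition Phi (m : nat) (p : int) (w : nat -> int) : int :=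
  \sum_(j < m.+2) cf m p j * w j.

Definition wok (m : nat) (p : int) (i : nat) (b : bool) : bool :=
  if p == -1 then ~~ ((i == 0%N) && b)
  else if p == (m.+1)%:Z then ~~ ((i == m) && ~~ b)
  else i%:Z != p.

Lemma wok_prefix m p i b : (i <= m)%N -> -1 <= p -> wok m p i b ->
  (i%:Z <= p) = (i.+1%:Z <= p).
Proof.
move=> Hi Hp; rewrite /wok.
case: eqP => [->|_]; first by move=> _; apply/idP/idP; lia.
case: eqP => [->|_]; first by move=> _; apply/idP/idP; lia.
move=> H; apply/idP/idP; lia.
Qed.

Lemma shift_diff n m b i w (Q : pred nat) : (i <= m)%N ->
  \sum_(j < m.+2 | Q j) shift n m b i w j = \sum_(j < m.+2 | Q j) w j
   + ((if Q i then shift n m b i w i - w i else 0)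
      + (if Q i.+1 then shift n m b i w i.+1 - w i.+1 else 0)).
Proof.
move=> Hi; apply: sum_diff2; try lia.
by move=> j _; apply: shift_other.
Qed.

Lemma shift_prefix n m b i w (Q : pred nat) : (i <= m)%N -> Q i = Q i.+1 ->
  (n%:Z %| \sum_(j < m.+2 | Q j) shift n m b i w j - \sum_(j < m.+2 | Q j) w j)%Z.
Proof.
move=> Hi HQ; rewrite shift_diff // addrC addKr -HQ.
case: (Q i); last by rewrite addr0 dvdz0.
rewrite shift_at shift_at1.
have -> : bucket n m i (w i + (if b then 1 else -1)) - w i +
    (bucket n m i.+1 (w i.+1 - (if b then 1 else -1)) - w i.+1) =
   (bucket n m i (w i + (if b then 1 else -1)) - (w i + (if b then 1 else -1))) +
    (bucket n m i.+1 (w i.+1 - (if b then 1 else -1)) - (w i.+1 - (if b then 1 else -1))) by ring.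
by rewrite rpredD // bucket_dvd.
Qed.

Lemma shift_vertex n m b i w : (0 < n)%N -> is_vertex n m w -> (i <= m)%N ->
  ((1 <= i)%N -> shift n m b i w i = 0 \/ shift n m b i w i = 1) ->
  ((i.+1 <= m)%N -> shift n m b i w i.+1 = 0 \/ shift n m b i w i.+1 = 1) ->
  is_vertex n m (shift n m b i w).
Proof.
move=> Hn [H0 H1 Hin Hs] Hi Ha Hb; split.
- case: (eqVneq i 0%N) => [->|Hi0].
    by rewrite shift_at bucket0 mod_bnd.
  by rewrite shift_other //; lia.
- case: (eqVneq i m) => [->|Hi0].
    by rewrite shift_at1 bucketS mod_bnd.
  by rewrite shift_other //; lia.
- move=> j Hj.
  case: (eqVneq j i) => [Hji|Hji]; first by rewrite Hji; apply: Ha; lia.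
  case: (eqVneq j i.+1) => [Hji1|Hji1]; first by rewrite Hji1; apply: Hb; lia.
  by rewrite shift_other //; apply: Hin.
- have Q : (n%:Z %| \sum_(j < m.+2 | true) shift n m b i w j - \sum_(j < m.+2 | true) w j)%Z.
    exact: (@shift_prefix n m b i w (fun _ : nat => true) Hi erefl).
  by have := rpredD Q Hs; rewrite subrK.
Qed.

Lemma shift_pivot n m b i w p : (i <= m)%N -> wok m p i b -> is_pivot n m w p ->
  is_pivot n m (shift n m b i w) p.
Proof.
move=> Hi Hw [Hp Hs]; split => //.
have Q : (n%:Z %| \sum_(j < m.+2 | j%:Z <= p) shift n m b i w j
     - \sum_(j < m.+2 | j%:Z <= p) w j)%Z.
  have E : (i%:Z <= p) = (i.+1%:Z <= p) by apply: wok_prefix Hw => //; lia.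
  exact: (@shift_prefix n m b i w (fun j : nat => j%:Z <= p) Hi E).
by have := rpredD Q Hs; rewrite subrK.
Qed.

Lemma Phi_shift n m b i w p : (i <= m)%N ->
  Phi m p (shift n m b i w) = Phi m p w +
   (cf m p i * (shift n m b i w i - w i) + cf m p i.+1 * (shift n m b i w i.+1 - w i.+1)).
Proof.
move=> Hi; rewrite /Phi.
rewrite (@sum_diff2 m.+2 i i.+1 (fun _ => true) (fun j => cf m p j * shift n m b i w j)
   (fun j => cf m p j * w j)) /=; try lia.
  by rewrite -!mulrBr.
by move=> j _ H1 H2; rewrite shift_other.
Qed.

Lemma Phi_lb n m b i w p : (0 < n)%N -> (2 <= m)%N -> is_vertex n m w -> (i <= m)%N ->
  -1 <= p <= (m.+1)%:Z -> wok m p i b -> Phi m p w <= Phi m p (shift n m b i w) + 1.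
Proof.
move=> Hn Hm [H0 H1 Hin _] Hi Hp Hw; rewrite Phi_shift //.
suff : -1 <= cf m p i * (shift n m b i w i - w i) + cf m p i.+1 * (shift n m b i w i.+1 - w i.+1) by lia.
rewrite shift_at shift_at1.
move: Hw; rewrite /wok.
case: (eqVneq i 0%N) => [->|Hi0].
  rewrite bucket0 bucket_in; last lia.
  have : w 0%N + -1 <= ((w 0%N + -1) %% n)%Z by apply: mod_ge => //; lia.
  have : 0 <= ((w 0%N + 1) %% n)%Z < n by apply: mod_bnd.
  set z1 := ((w 0%N + 1) %% n)%Z; set z2 := ((w 0%N + -1) %% n)%Z.
  case: b; rewrite /cf; repeat (case: ifP => ?); nia.
case: (eqVneq i m) => [->|Him].
  rewrite bucketS bucket_in; last lia.
  have : w m.+1 - 1 <= ((w m.+1 - 1) %% n)%Z by apply: mod_ge => //; lia.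
  have : 0 <= ((w m.+1 + 1) %% n)%Z < n by apply: mod_bnd.
  set z1 := ((w m.+1 + 1) %% n)%Z; set z2 := ((w m.+1 - 1) %% n)%Z.
  case: b; rewrite /cf; repeat (case: ifP => ?); nia.
rewrite !bucket_in; try lia.
case: b; rewrite /cf; repeat (case: ifP => ?); lia.
Qed.

Lemma is_wall_cons m p i b P : is_wall m p ((i, b) :: P) -> wok m p i b /\ is_wall m p P.
Proof.
move=> H; split; first by have := H (i, b); rewrite mem_head => /(_ isT).
by move=> s Hs; apply: H; rewrite in_cons Hs orbT.
Qed.

Lemma lower_walk n m p : (0 < n)%N -> (2 <= m)%N -> -1 <= p <= (m.+1)%:Z ->
  forall P w, is_vertex n m w -> is_walk n m w P -> is_wall m p P ->
  Phi m p w <= (size P)%:Z + Phi m p (walk_end n m w P).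
Proof.
move=> Hn Hm Hp; elim=> [|[i b] P IH] w Hv /=; first by move=> _ _; lia.
move=> [Hi [Hv' Hw']] /is_wall_cons [Hok Hwall].
have := IH _ Hv' Hw' Hwall.
have := @Phi_lb n m b i w p Hn Hm Hv Hi Hp Hok.
rewrite /walk_end /=; lia.
Qed.

Lemma Phi_end_zero m p (w : nat -> int) : (forall j, (j <= m.+1)%N -> w j = 0) -> Phi m p w = 0.
Proof. move=> H; rewrite /Phi big1 // => j _; rewrite H ?mulr0 //; have := ltn_ord j; lia. Qed.

Lemma sum_inner_zero m (Q : pred nat) (w : nat -> int) : (forall j, (1 <= j <= m)%N -> w j = 0) ->
  \sum_(j < m.+2 | Q j) w j = (if Q 0%N then w 0%N else 0) + (if Q m.+1 then w m.+1 else 0).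
Proof.
move=> H.
rewrite (@sum_diff2 m.+2 0 m.+1 Q w (fun _ => 0)) //; last first.
  move=> j Hj H1 H2; rewrite H //; lia.
by rewrite big1 // add0r !subr0.
Qed.

Lemma dvd_small n x : (n%:Z %| x)%Z -> 0 <= x < n%:Z -> x = 0.
Proof. by move=> /dvdz_mod0P H1 H2; rewrite -(modz_small H2). Qed.

Lemma cf_ge0 m p j : 0 <= cf m p j.
Proof. rewrite /cf; repeat case: ifP => ?; lia. Qed.

Lemma Phi_zero n m p (w : nat -> int) : (0 < n)%N -> is_vertex n m w -> is_pivot n m w p -> Phi m p w = 0 ->
  forall j, (j <= m.+1)%N -> w j = 0.
Proof.
move=> Hn [H0 H1 Hin Hs] [Hp Hpv] HP.
have Hge : forall j : 'I_m.+2, true -> 0 <= cf m p j * w j.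
  move=> j _; apply: mulr_ge0; first exact: cf_ge0.
  have := ltn_ord j; case: (posnP j) => [->|Hj0] Hj; first by case/andP: H0.
  case: (eqVneq (nat_of_ord j) m.+1) => [->|Hjm]; first by case/andP: H1.
  by case: (Hin j) => [|->|->] //; lia.
have Z := psumr_eq0P Hge HP.
have Hinner : forall j, (1 <= j <= m)%N -> w j = 0.
  move=> j Hj; have Hjl : (j < m.+2)%N by lia.
  have := Z (Ordinal Hjl) isT => /= /eqP; rewrite mulf_eq0 => /orP [|/eqP //].
  rewrite /cf; repeat case: ifP => ?; lia.
have T : (n%:Z %| w 0%N + w m.+1)%Z.
  have E := @sum_inner_zero m (fun _ => true) w Hinner; simpl in E.
  by rewrite E in Hs.
have Hb : w 0%N = 0 /\ w m.+1 = 0.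
  case: (ltP p 0) => Hp0.
    have Hw0 : w 0%N = 0.
      have := Z (@Ordinal m.+2 0 isT) isT => /= /eqP; rewrite mulf_eq0 => /orP [|/eqP //].
      rewrite /cf; repeat case: ifP => ?; lia.
    split => //; move: T; rewrite Hw0 add0r => /dvd_small; apply; lia.
  case: (ltP (m%:Z) p) => Hpm.
    have Hw1 : w m.+1 = 0.
      have := Z (@Ordinal m.+2 m.+1 (ltnSn _)) isT => /= /eqP; rewrite mulf_eq0 => /orP [|/eqP //].
      rewrite /cf; repeat case: ifP => ?; lia.
    split => //; move: T; rewrite Hw1 addr0 => /dvd_small; apply; lia.
  have Hw0 : w 0%N = 0.
    have E := @sum_inner_zero m (fun j : nat => j%:Z <= p) w Hinner; simpl in E.
    move: Hpv; rewrite E.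
    case: ifP => ?; last lia.
    case: ifP => ?; first lia.
    by rewrite addr0 => /dvd_small; apply.
  split => //; move: T; rewrite Hw0 add0r => /dvd_small; apply; lia.
move=> j Hj; case: (posnP j) => [->|Hj0]; first by case: Hb.
case: (eqVneq j m.+1) => [->|Hjm]; first by case: Hb.
apply: Hinner; lia.
Qed.

Lemma step_exists n m p (w : nat -> int) : (0 < n)%N -> (2 <= m)%N -> is_vertex n m w ->
  is_pivot n m w p -> 0 < Phi m p w ->
  exists i b, [/\ (i <= m)%N, wok m p i b, is_vertex n m (shift n m b i w) &
     Phi m p (shift n m b i w) = Phi m p w - 1].
Proof.
move=> Hn Hm Hv Hpv HP.
have Hv0 := Hv; case: Hv0 => H0 H1 Hin Hs.
case: Hpv => Hp _.
have w01 : forall j, (1 <= j <= m)%N -> 0 <= w j <= 1.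
  by move=> j /Hin [] ->.
pose PA := fun j : nat => [&& (1 <= j)%N, (j <= m)%N, (j%:Z <= p) & (w j == 1)].
pose PB := fun j : nat => [&& (1 <= j)%N, (j <= m)%N, (p + 1 <= j%:Z) & (w j == 1)].
case: (classic (exists j, PA j)) => [HA|HA].
  case: (ex_minnP HA) => k Hk Hmin.
  case: k Hk Hmin => [|k] Hk Hmin; first by move: Hk; rewrite /PA.
  move: (Hk); rewrite /PA => /and4P [_ Hkm Hkp /eqP Hw1].
  exists k, true.
  have Hwk : (1 <= k)%N -> w k = 0.
    move=> Hk1; case: (Hin k) => [|//|Hwk]; first lia.
    have : PA k by rewrite /PA Hwk eqxx /=; apply/and3P; split; lia.
    by move/Hmin; lia.
  have Sk1 : shift n m true k w k.+1 = 0.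
    by rewrite shift_at1 bucket_in ?Hw1 ?subrr //; lia.
  split.
  - lia.
  - rewrite /wok; repeat case: ifP => ?; lia.
  - apply: shift_vertex => //; try lia.
      move=> Hk1; rewrite shift_at bucket_in ?Hwk //; try (right; ring); try lia.
  - rewrite Phi_shift; last lia.
    rewrite Sk1 Hw1.
    case: (posnP k) => [Hk0|Hk0].
      subst k; rewrite /cf; repeat case: ifP => ?; nia.
    rewrite shift_at bucket_in ?Hwk //; last lia.
    rewrite /cf; repeat case: ifP => ?; nia.
case: (classic (exists j, PB j)) => [HB|HB].
  have ub : forall j, PB j -> (j <= m)%N by move=> j /and4P [].
  case: (ex_maxnP HB ub) => k Hk Hmax.
  move: (Hk); rewrite /PB => /and4P [Hk1 Hkm Hkp /eqP Hw1].
  exists k, false.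
  have Hwk : (k.+1 <= m)%N -> w k.+1 = 0.
    move=> Hk2; case: (Hin k.+1) => [|//|Hwk]; first lia.
    have : PB k.+1 by rewrite /PB Hwk eqxx /=; apply/and3P; split; lia.
    by move/Hmax; lia.
  have Sk : shift n m false k w k = 0.
    by rewrite shift_at bucket_in ?Hw1 //; try ring; try lia.
  split.
  - lia.
  - rewrite /wok; repeat case: ifP => ?; lia.
  - apply: shift_vertex => //; try lia.
    move=> Hk2; rewrite shift_at1 bucket_in ?Hwk //; try (right; ring); try lia.
  - rewrite Phi_shift; last lia.
    rewrite Sk Hw1.
    case: (eqVneq k m) => [Hkm'|Hkm'].
      subst k; rewrite /cf; repeat case: ifP => ?; nia.
    rewrite shift_at1 bucket_in ?Hwk //; try lia.
    rewrite /cf; repeat case: ifP => ?; nia.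
have Hinner : forall j, (1 <= j <= m)%N -> w j = 0.
  move=> j Hj; case: (Hin j Hj) => // Hw1; exfalso.
  case: (lerP (j%:Z) p) => Hjp.
    by apply: HA; exists j; rewrite /PA Hw1 eqxx andbT; apply/and3P; split; lia.
  by apply: HB; exists j; rewrite /PB Hw1 eqxx andbT; apply/and3P; split; lia.
have EP : Phi m p w = cf m p 0 * w 0%N + cf m p m.+1 * w m.+1.
  have E := @sum_inner_zero m (fun _ => true) (fun j => cf m p j * w j).
  rewrite /Phi E //= => j Hj; rewrite Hinner ?mulr0 //.
case: (ltP p 0) => Hp0.
  exists 0%N, false.
  have w0pos : 0 < w 0%N.
    move: HP; rewrite EP; rewrite /cf; repeat case: ifP => ?; nia.
  have S0 : shift n m false 0 w 0%N = w 0%N - 1.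
    rewrite shift_at bucket0 modz_small //; lia.
  have S1 : shift n m false 0 w 1%N = 1.
    rewrite shift_at1 bucket_in ?Hinner //; try ring; try lia.
  split.
  - lia.
  - rewrite /wok; repeat case: ifP => ?; lia.
  - apply: shift_vertex => //; try lia.
  - rewrite Phi_shift; last lia.
    rewrite S0 S1 (Hinner 1%N); last lia.
    rewrite EP /cf; repeat case: ifP => ?; nia.
case: (ltP (m%:Z) p) => Hpm.
  exists m, true.
  have w1pos : 0 < w m.+1.
    move: HP; rewrite EP; rewrite /cf; repeat case: ifP => ?; nia.
  have S0 : shift n m true m w m.+1 = w m.+1 - 1.
    rewrite shift_at1 bucketS modz_small //; lia.
  have S1 : shift n m true m w m = 1.
    rewrite shift_at bucket_in ?Hinner //; try ring; try lia.
  split.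
  - lia.
  - rewrite /wok; repeat case: ifP => ?; lia.
  - apply: shift_vertex => //; try lia.
  - rewrite Phi_shift; last lia.
    rewrite S0 S1 (Hinner m); last lia.
    rewrite EP /cf; repeat case: ifP => ?; nia.
exfalso; move: HP; rewrite EP /cf; repeat case: ifP => ?; nia.
Qed.

Lemma upper n m p : (0 < n)%N -> (2 <= m)%N -> forall N (w : nat -> int),
  is_vertex n m w -> is_pivot n m w p -> Phi m p w = N%:Z ->
  exists P, [/\ is_path_to_zero n m w P, is_wall m p P & size P = N].
Proof.
move=> Hn Hm; elim=> [|N IH] w Hv Hpv HP.
  exists [::]; split => //; split => //.
  exact: (@Phi_zero n m p w Hn Hv Hpv HP).
have [i [b [Hi Hok Hv' HP']]] : exists i b, [/\ (i <= m)%N, wok m p i b, is_vertex n m (shift n m b i w) &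
     Phi m p (shift n m b i w) = Phi m p w - 1] by apply: step_exists => //; lia.
have Hpv' := @shift_pivot n m b i w p Hi Hok Hpv.
have [P [[Hw Hend] Hwall Hsz]] : exists P, [/\ is_path_to_zero n m (shift n m b i w) P, is_wall m p P & size P = N].
  by apply: IH => //; rewrite HP' HP; lia.
exists ((i, b) :: P); split => //=; last by rewrite Hsz.
by move=> s; rewrite in_cons => /orP [/eqP -> | Hs]; [exact: Hok | exact: Hwall].
Qed.

Lemma vertex_ge0 n m (w : nat -> int) j : is_vertex n m w -> (j <= m.+1)%N -> 0 <= w j.
Proof.
case=> H0 H1 Hin _ Hj; case: (posnP j) => [->|Hj0]; first by case/andP: H0.
case: (eqVneq j m.+1) => [->|Hjm]; first by case/andP: H1.
by case: (Hin j) => [|->|->] //; lia.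
Qed.

Lemma Phi_ge0 n m p w : is_vertex n m w -> 0 <= Phi m p w.
Proof.
move=> Hv; apply: sumr_ge0 => j _; apply: mulr_ge0; first exact: cf_ge0.
by apply: (@vertex_ge0 n m w j Hv); have := ltn_ord j; lia.
Qed.

Lemma rhs_Phi m p (v : nat -> int) :
    \sum_(i < m.+2 | (1 <= i)%N && (i%:Z <= p)) (i%:Z * v i)
    + \sum_(i < m.+2 | (p + 1 <= i%:Z) && (i <= m)%N) ((m.+1 - i)%N%:Z * v i)
  = Phi m p v.
Proof.
rewrite /Phi big_mkcond [X in _ + X = _]big_mkcond -big_split /=.
apply: eq_bigr => j _; rewrite /cf; repeat case: ifP => ?; nia.
Qed.

Lemma revsum a k : (\sum_(a <= j < a + k) (a + k - j))%N = 'C(k.+1, 2).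
Proof.
elim: k => [|k IH]; first by rewrite addn0 big_geq.
rewrite addnS big_nat_recl; last lia.
rewrite (eq_big_nat _ _ (F2 := fun j => (a + k - j)%N)); last by move=> j _; lia.
by rewrite IH [in RHS]binS bin1; lia.
Qed.

Definition fnl (q j : nat) : nat := if (1 <= j <= q)%N then j else 0%N.
Definition fnr (m q j : nat) : nat := if (q + 1 <= j <= m)%N then (m.+1 - j)%N else 0%N.

Lemma fsum m q : (q <= m)%N ->
  (\sum_(j < m.+2) (fnl q j + fnr m q j))%N = ('C(q.+1, 2) + 'C((m - q).+1, 2))%N.
Proof.
move=> Hq; rewrite big_split /= -!(big_mkord xpredT) /= /fnl /fnr.
congr (_ + _)%N.
  rewrite (big_cat_nat (n := q.+1)) //=; try lia.
  rewrite (eq_big_nat _ _ (F2 := fun j => j)); last by move=> j Hj; case: ifP; lia.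
  rewrite bin2_sum big_nat_cond big1 ?addn0 // => j /andP [Hj _]; case: ifP; lia.
rewrite (big_cat_nat (n := q.+1)) //=; try lia.
rewrite big_nat_cond big1 ?add0n; last by move=> j /andP [Hj _]; case: ifP; lia.
rewrite (big_cat_nat (n := m.+1)) //=; try lia.
rewrite [X in (_ + X)%N]big_nat_cond [X in (_ + X)%N]big1 ?addn0; last by move=> j /andP [Hj _]; case: ifP; lia.
have -> : m.+1 = (q.+1 + (m - q))%N by lia.
rewrite (eq_big_nat _ _ (F2 := fun j => (q.+1 + (m - q) - j)%N)); last by move=> j Hj; case: ifP; lia.
by rewrite revsum.
Qed.

Theorem corollary4p12 (n m : nat) (v : nat -> int) (p : int) :
  (1 <= n)%N -> (2 <= m)%N -> is_vertex n m v -> is_pivot n m v p ->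
  (ps n m p v)%:Z =
    \sum_(i < m.+2 | (1 <= i)%N && (i%:Z <= p)) (i%:Z * v i)
    + \sum_(i < m.+2 | (p + 1 <= i%:Z) && (i <= m)%N) ((m.+1 - i)%N%:Z * v i)
  /\ (0 <= p <= m%:Z ->
      (ps n m p v)%:Z <= ('C((absz p).+1, 2) + 'C((m - absz p).+1, 2))%N%:Z).
Proof.
move=> Hn Hm Hv Hpv.
rewrite rhs_Phi.
have Hp : -1 <= p <= (m.+1)%:Z by case: Hpv.
have HK := @Phi_ge0 n m p v Hv.
have [k Hk] : exists k : nat, Phi m p v = k%:Z by exists (absz (Phi m p v)); rewrite gez0_abs.
have [P0 [HP0 HW0 HS0]] := @upper n m p Hn Hm k v Hv Hpv Hk.
have Hlow : forall P, is_path_to_zero n m v P -> is_wall m p P -> (k <= size P)%N.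
  move=> P [Hw Hend] Hwall.
  have := @lower_walk n m p Hn Hm Hp P v Hv Hw Hwall.
  rewrite (@Phi_end_zero m p (walk_end n m v P)) // Hk; lia.
have Hmin : is_min_wall_len n m p v k.
  by split => //; exists P0.
have Hps : ps n m p v = k.
  have := epsilon_spec (inhabits 0%N) (is_min_wall_len n m p v) (ex_intro _ k Hmin).
  rewrite -/(ps n m p v).
  move=> [[P1 [HP1 [HW1 HS1]]] Hm1].
  have := Hm1 P0 HP0 HW0; have := Hlow P1 HP1 HW1; lia.
split; first by rewrite Hps Hk.
move=> Hp2; rewrite Hps -Hk.
have Hq : p = (absz p)%:Z by rewrite gez0_abs //; lia.
have Hle : Phi m p v <= \sum_(j < m.+2) cf m p j.
  apply: ler_sum => j _.
  have Hj := ltn_ord j.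
  have H0 : 0 <= v j by apply: (@vertex_ge0 n m v j Hv); lia.
  have Hc := cf_ge0 m p j.
  have H1 : cf m p j = 0 \/ v j <= 1.
    case: (posnP j) => [Hj0|Hj0].
      by left; rewrite /cf Hj0; repeat case: ifP => ?; lia.
    case: (eqVneq (nat_of_ord j) m.+1) => [Hjm|Hjm].
      by left; rewrite /cf Hjm; repeat case: ifP => ?; lia.
    by right; case: Hv => _ _ Hin _; case: (Hin j) => [|->|->] //; lia.
  case: H1 => [->|H1]; nia.
apply: (le_trans Hle).
have -> : \sum_(j < m.+2) cf m p j = \sum_(j < m.+2) (fnl (absz p) j + fnr m (absz p) j)%N%:Z.
  apply: eq_bigr => j _; rewrite /cf /fnl /fnr; repeat case: ifP => ?; lia.
rewrite -(big_morph Posz PoszD (erefl (Posz 0))) fsum //; lia.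
Qed.
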